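(* Let $\mathcal{H}$ be an infinite-dimensional complex separable Hilbert space, $A\in\mathcal{B}(\mathcal{H})$ such that $\{e^{tA}\}_{t\ge0}$ is exponentially stable, and $\mathcal{G}\subset\mathcal{H}$ countable. If $\{e^{tA}g\}_{g\in\mathcal{G},\,t\in[0,\infty)}$ is a semi-continuous frame for $\mathcal{H}$, then $|\mathcal{G}|=\infty$.
   Context: For $A\in\mathcal{B}(\mathcal{H})$, $e^{tA}:=\sum_{n\ge0}\frac{t^n}{n!}A^n$. The semigroup $\{e^{tA}\}_{t\ge0}$ is exponentially stable if there are constants $M\ge1$ and $\omega<0$ with $\|e^{tA}\|\le Me^{\omega t}$ for all $t\ge0$. For a countable $\mathcal{G}\subset\mathcal{H}$ and an interval $\mathcal{T}\subset[0,\infty)$, $\{e^{tA}g\}_{g\in\mathcal{G},t\in\mathcal{T}}$ is a semi-continuous frame for $\mathcal{H}$ if there are constants $c,C>0$ such that $c\|f\|^2\le\sum_{g\in\mathcal{G}}\int_{\mathcal{T}}|\langle f,e^{tA}g\rangle|^2\,dt\le C\|f\|^2$ for all $f\in\mathcal{H}$. *)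

(* Defs.v *)
From HB Require Import structures.
From mathcomp Require Import all_boot all_order all_algebra.
From mathcomp Require Import complex.
From mathcomp Require Import all_classical all_reals all_analysis.
Set Implicit Arguments. Unset Strict Implicit. Unset Printing Implicit Defensive.
Import Order.TTheory GRing.Theory Num.Theory.
Local Open Scope ring_scope.
Local Open Scope classical_set_scope.

Section Hilbert.
Variable R : realType.
Local Notation C := R[i].
Variable V : lmodType C.
Variable ip : V -> V -> C.  (* <x, y>, linear in x, conjugate-linear in y *)

Definition is_inner_product : Prop :=
  [/\ (forall (a : C) (x y z : V), ip (a *: x + y) z = a * ip x z + ip y z),
      (forall x y : V, ip y x = Num.conj (ip x y)),
      (forall x : V, 0 <= ip x x) &
      (forall x : V, ip x x = 0 -> x = 0)].

Definition hnorm (x : V) : R := Num.sqrt (complex.Re (ip x x)).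

Definition cmod (z : C) : R := ComplexField.Normc.normc z.

Definition hcvg (u : nat -> V) (l : V) : Prop :=
  forall e : R, 0 < e -> exists N : nat, forall n, (N <= n)%N -> hnorm (u n - l) < e.

Definition hcauchy (u : nat -> V) : Prop :=
  forall e : R, 0 < e -> exists N : nat,
    forall m n, (N <= m)%N -> (N <= n)%N -> hnorm (u m - u n) < e.

Definition hcomplete : Prop :=
  forall u : nat -> V, hcauchy u -> exists l, hcvg u l.

Definition hseparable : Prop :=
  exists D : set V, countable D /\
    forall (x : V) (e : R), 0 < e -> exists2 d, D d & hnorm (x - d) < e.

Definition infinite_dimensional : Prop :=
  forall n : nat, exists v : 'I_n -> V,
    forall a : 'I_n -> C, \sum_(i < n) a i *: v i = 0 -> forall i, a i = 0.

Definition is_inf_dim_sep_Hilbert : Prop :=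
  [/\ is_inner_product, hcomplete, hseparable & infinite_dimensional].

Definition bounded_operator (A : V -> V) : Prop :=
  (forall (a : C) (x y : V), A (a *: x + y) = a *: A x + A y) /\
  exists M : R, forall x, hnorm (A x) <= M * hnorm x.

(** [S t x] is e^{tA} x := sum_n t^n/n! A^n x (series converging in V) *)
Definition is_exp_semigroup (A : V -> V) (S : R -> V -> V) : Prop :=
  forall (t : R) (x : V),
    hcvg (fun N => \sum_(n < N) (real_complex R (t ^+ n / (n`!)%:R) *: iter n A x)) (S t x).

Definition exp_stable (S : R -> V -> V) : Prop :=
  exists (M omega : R), 1 <= M /\ omega < 0 /\
    forall t : R, 0 <= t -> forall x : V,
      hnorm (S t x) <= M * expR (omega * t) * hnorm x.

Definition semi_continuous_frame (S : R -> V -> V) (G : set V) (T : set R) : Prop :=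
  exists c Cc : R, 0 < c /\ 0 < Cc /\
    forall f : V,
      let s := (\esum_(g in G)
                 \int[@lebesgue_measure R]_(t in T) ((cmod (ip f (S t g))) ^+ 2)%:E)%E in
      ((c * hnorm f ^+ 2)%:E <= s)%E /\ (s <= (Cc * hnorm f ^+ 2)%:E)%E.

End Hilbert.

(* Main.v *)
Require Import Defs.
From HB Require Import structures.
From mathcomp Require Import all_boot all_order all_algebra.
From mathcomp Require Import complex.
From mathcomp Require Import all_classical all_reals all_analysis.
From mathcomp Require Import ring lra.
Import Order.TTheory GRing.Theory Num.Theory.
Local Open Scope ring_scope.
Local Open Scope classical_set_scope.
Local Notation "x %:C" := (real_complex _ x) (at level 1, format "x %:C").

Section Cmod.
Variable R : realType.
Local Notation C := R[i].
Lemma cmodE' (z : C) : ((cmod z)%:C : C) = `|z|.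
Proof. by case: z. Qed.
Lemma lerC (a b : R) : ((a%:C : C) <= b%:C) = (a <= b).
Proof. by rewrite lecE /= eqxx. Qed.
Lemma realC_inj : injective (real_complex R).
Proof. by move=> a b [->]. Qed.
Lemma cmodD (a b : C) : cmod (a + b) <= cmod a + cmod b.
Proof. by rewrite -lerC rmorphD /= !cmodE'; exact: ler_normD. Qed.
Lemma cmodM (a b : C) : cmod (a * b) = cmod a * cmod b.
Proof. by apply: realC_inj; rewrite rmorphM /= !cmodE' normrM. Qed.
Lemma cmodN (a : C) : cmod (- a) = cmod a.
Proof. by apply: realC_inj; rewrite !cmodE' normrN. Qed.
Lemma cmodJ (a : C) : cmod (Num.conj a) = cmod a.
Proof. by apply: realC_inj; rewrite !cmodE' norm_conjC. Qed.
Lemma cmod_real (r : R) : cmod (r%:C) = `|r|.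
Proof.
rewrite /cmod /=.
have -> : forall y : R, Num.sqrt (y ^+ 2 + (0 : R) ^+ 2) = `|y|.
  by move=> y; rewrite expr0n addr0 sqrtr_sqr.
by [].
Qed.
Lemma cmod0 : cmod (0 : C) = 0.
Proof. by apply: realC_inj; rewrite cmodE' normr0 rmorph0. Qed.
Lemma cmod_sum I (s : seq I) (F : I -> C) :
  cmod (\sum_(i <- s) F i) <= \sum_(i <- s) cmod (F i).
Proof.
elim: s => [|a s IH]; first by rewrite !big_nil cmod0.
by rewrite !big_cons (le_trans (cmodD _ _)) // lerD2l.
Qed.
End Cmod.

Section Tail.
Variable R : realType.
Lemma exp_tail (x e : R) : 0 < e -> exists N, forall a b, (N <= a)%N ->
  \sum_(a <= k < b) x ^+ k / (k`!)%:R < e.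
Proof.
move=> e0.
have e2 : 0 < e / 2 by rewrite divr_gt0. 
have /cvgrPdist_lt /(_ (e / 2) e2) := @is_cvg_series_exp_coeff R x.
case=> N _ HN.
exists N => a b Na.
have [ab|ba] := leqP a b; last by rewrite big_geq ?(ltnW ba).
have -> : \sum_(a <= k < b) x ^+ k / (k`!)%:R = series (exp_coeff x) b - series (exp_coeff x) a.
  rewrite /series /= (@big_cat_nat _ _ _ a 0 b) // /= addrC addrK.
  by apply: eq_bigr => k _; rewrite exp_coeffE mulrC.
set l := limn _ in HN.
have h1 := HN a Na; have h2 := HN b (leq_trans Na ab).
rewrite /= in h1 h2.
have -> : series (exp_coeff x) b - series (exp_coeff x) a =
  (l - series (exp_coeff x) a) - (l - series (exp_coeff x) b).
  by lra.
apply: (le_lt_trans (ler_norm _)).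
apply: (le_lt_trans (ler_normB _ _)).
by rewrite (splitr e) ltrD.
Qed.
End Tail.

Section Integ.
Local Open Scope ereal_scope.
Context d (T : measurableType d) (R : realType).
Variable mu : {measure set T -> \bar R}.
Lemma le_integral_nn (D : set T) (f g : T -> \bar R) :
  (forall x, D x -> 0 <= f x) -> (forall x, D x -> f x <= g x) ->
  \int[mu]_(x in D) f x <= \int[mu]_(x in D) g x.
Proof.
move=> f0 fg.
have g0 : forall x, D x -> 0 <= g x by move=> x Dx; exact: le_trans (f0 x Dx) (fg x Dx).
rewrite !ge0_integralE //; apply: ereal_sup_le => _ [h hf <-]; exists h => //= x.
apply: (le_trans (hf x)); rewrite !patchE; case: ifP => // /set_mem Dx.
exact: fg.
Qed.
End Integ.

Section ExpInt.
Variable R : realType.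
Local Open Scope ereal_scope.
Lemma int_exp (r B : R) : (0 < r)%R -> (0 <= B)%R ->
  \int[@lebesgue_measure R]_(t in `[0%R, +oo[) ((B * expR (- r * t))%R)%:E = (B / r)%:E.
Proof.
move=> r0 B0.
transitivity (\int[@lebesgue_measure R]_(t in `[0%R, +oo[) ((B / r)%:E * (exponential_pdf r t)%:E)).
  apply: eq_integral => t; rewrite inE /= in_itv /= => /andP[t0 _].
  rewrite exponential_pdfE // -EFinM; congr EFin; field.
  by rewrite gt_eqF.
rewrite ge0_integralZl_EFin //; last 3 first.
- by move=> t _; have := @exponential_pdf_ge0 R r (ltW r0) t; rewrite -lee_fin.
- apply/measurable_realfun.measurable_EFinP; apply: measurable_funTS; exact: measurable_exponential_pdf.
- by rewrite divr_ge0 // ltW.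
rewrite integral_mkcond.
have -> : (fun t => (exponential_pdf r t)%:E) \_ `[0%R, +oo[ = (fun t => (exponential_pdf r t)%:E).
  apply/funext => t; rewrite patchE; case: ifP => // /negbT.
  move=> /negP Hn; have t0 : (t < 0)%R.
    by rewrite ltNge; apply/negP => t0; apply: Hn; apply: mem_set; rewrite /= in_itv /= t0.
  by rewrite lt0_exponential_pdf.
by rewrite integral_exponential_pdf // mule1.
Qed.
End ExpInt.

Section IP.
Variable R : realType.
Local Notation C := R[i].
Variable V : lmodType C.
Variable ip : V -> V -> C.
Hypothesis hip : is_inner_product ip.

Lemma ipDZl a x y z : ip (a *: x + y) z = a * ip x z + ip y z.
Proof. by move: hip; rewrite /is_inner_product => -[] *; auto. Qed.
Lemma ipC x y : ip y x = Num.conj (ip x y).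
Proof. by move: hip; rewrite /is_inner_product => -[] *; auto. Qed.
Lemma ip_ge0 x : 0 <= ip x x.
Proof. by move: hip; rewrite /is_inner_product => -[] *; auto. Qed.
Lemma ip_eq0 x : ip x x = 0 -> x = 0.
Proof. by move: hip; rewrite /is_inner_product => -[] *; auto. Qed.

Lemma ip0l z : ip 0 z = 0.
Proof.
have := ipDZl 1 0 0 z; rewrite scaler0 addr0 mul1r => h.
by apply/esym/(addrI (ip 0 z)); rewrite addr0 -h.
Qed.
Lemma ipZl a x z : ip (a *: x) z = a * ip x z.
Proof. by have := ipDZl a x 0 z; rewrite addr0 ip0l addr0. Qed.
Lemma ipDl x y z : ip (x + y) z = ip x z + ip y z.
Proof. by have := ipDZl 1 x y z; rewrite scale1r mul1r. Qed.
Lemma ipNl x z : ip (- x) z = - ip x z.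
Proof. by rewrite -scaleN1r ipZl mulN1r. Qed.
Lemma ipBl x y z : ip (x - y) z = ip x z - ip y z.
Proof. by rewrite ipDl ipNl. Qed.
Lemma ip0r z : ip z 0 = 0.
Proof. by rewrite ipC ip0l conjC0. Qed.
Lemma ipZr a x z : ip z (a *: x) = Num.conj a * ip z x.
Proof. by rewrite ipC ipZl rmorphM /= -ipC. Qed.
Lemma ipDr x y z : ip z (x + y) = ip z x + ip z y.
Proof. by rewrite ipC ipDl rmorphD /= -!ipC. Qed.
Lemma ipBr x y z : ip z (x - y) = ip z x - ip z y.
Proof. by rewrite ipC ipBl rmorphB /= -!ipC. Qed.
Lemma ip_suml I (r : seq I) P (F : I -> V) z :
  ip (\sum_(i <- r | P i) F i) z = \sum_(i <- r | P i) ip (F i) z.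
Proof.
elim/big_rec2: _ => [|i y1 y2 _ <-]; first exact: ip0l.
by rewrite ipDl.
Qed.
Lemma ip_sumr I (r : seq I) P (F : I -> V) z :
  ip z (\sum_(i <- r | P i) F i) = \sum_(i <- r | P i) ip z (F i).
Proof.
elim/big_rec2: _ => [|i y1 y2 _ <-]; first exact: ip0r.
by rewrite ipDr.
Qed.

Lemma ip_real x : ip x x = (complex.Re (ip x x))%:C.
Proof.
have := ip_ge0 x; move: (ip x x) => [a b]; rewrite lecE /= => /andP[/eqP -> _].
by [].
Qed.
Lemma Re_ip_ge0 x : 0 <= complex.Re (ip x x).
Proof. by have := ip_ge0 x; rewrite lecE => /andP[]. Qed.

Lemma hnorm_ge0 x : 0 <= hnorm ip x.
Proof. exact: sqrtr_ge0. Qed.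
Lemma hnorm_sq x : hnorm ip x ^+ 2 = complex.Re (ip x x).
Proof. by rewrite sqr_sqrtr // Re_ip_ge0. Qed.
Lemma hnorm_sqC x : ((hnorm ip x ^+ 2)%:C : C) = ip x x.
Proof. by rewrite hnorm_sq -ip_real. Qed.

Lemma cmodE (z : C) : ((cmod z)%:C : C) = `|z|.
Proof. by case: z. Qed.

Lemma CS_C x y : `|ip x y| ^+ 2 <= ip x x * ip y y.
Proof.
have [y0|yn0] := eqVneq (ip y y) 0.
  by rewrite (@ip_eq0 y y0) ip0r normr0 expr0n /= ip0l mulr0.
have py : 0 < ip y y by rewrite lt_def yn0 ip_ge0.
set a := ip x y / ip y y.
have := ip_ge0 (x - a *: y).
rewrite ipBl !ipBr !ipZl !ipZr.
have cy : Num.conj (ip y y) = ip y y by rewrite -ipC.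
have e1 : ip y x = Num.conj (ip x y) by rewrite ipC.
have ea : Num.conj a = Num.conj (ip x y) / ip y y.
  by rewrite /a rmorphM /= fmorphV /= -[X in _ / X]ipC.
rewrite ea e1 /a normCK.
set p := ip y y; set q := ip x y; set qc := Num.conj q.
have -> : ip x x - qc / p * q - (q / p * qc - q / p * (qc / p * p)) =
   ip x x - q * qc / p.
  by field.
rewrite subr_ge0 ler_pdivrMr //.
Qed.

Lemma cmod_ge0 (z : C) : 0 <= cmod z.
Proof. by case: z => a b; exact: sqrtr_ge0. Qed.

Lemma CS x y : cmod (ip x y) <= hnorm ip x * hnorm ip y.
Proof.
rewrite -ler_sqr ?nnegrE ?cmod_ge0 ?mulr_ge0 ?hnorm_ge0 //.
have := CS_C x y.
rewrite -cmodE -!hnorm_sqC -rmorphXn -!rmorphM /= lecE /= => /andP[_].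
by rewrite exprMn.
Qed.

Lemma hnorm_eq0 x : hnorm ip x = 0 -> x = 0.
Proof.
move=> h; apply: ip_eq0; rewrite -hnorm_sqC h expr0n /=.
by [].
Qed.

Lemma exists_orth (ws : seq V) : infinite_dimensional V ->
  exists f, f != 0 /\ forall w, w \in ws -> ip f w = 0.
Proof.
move=> /(_ (size ws).+1) [v vind].
pose B : 'M[C]_((size ws).+1, size ws) := \matrix_(i, j) ip (v i) (nth 0 ws j).
have K : kermx B != 0.
  rewrite -mxrank_eq0 mxrank_ker; have := rank_leq_col B.
  by rewrite subn_eq0 -ltnNge ltnS.
have [i0 ri0] : exists i, row i (kermx B) != 0.
  apply/existsP; rewrite -negb_forall; apply: contra K => /forallP h.
  apply/eqP/row_matrixP => i; rewrite row0.
  exact/eqP/h.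
set u := row i0 (kermx B) in ri0.
have uB : u *m B = 0 by rewrite /u -row_mul mulmx_ker row0.
exists (\sum_i u ord0 i *: v i); split.
  apply/eqP => /vind h; apply/negP: ri0; rewrite negbK; apply/eqP/rowP => j.
  by rewrite h mxE.
move=> w ww; rewrite ip_suml.
have jlt : (index w ws < size ws)%N by rewrite index_mem.
have -> : w = nth 0 ws (Ordinal jlt) by rewrite /= (nth_index 0 ww).
have := congr1 (fun M : 'rV[C]_(size ws) => M ord0 (Ordinal jlt)) uB; rewrite !mxE => E.
rewrite -[RHS]E; apply: eq_bigr => i _; by rewrite ipZl !mxE.
Qed.

Lemma iter_bound (A : V -> V) : bounded_operator ip A ->
  exists K, 0 <= K /\ forall n x, hnorm ip (iter n A x) <= K ^+ n * hnorm ip x.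
Proof.
case=> _ [M hM]; exists (Num.max M 0); split; first by rewrite le_max lexx orbT.
move=> n x; elim: n => [|n IH] /=; first by rewrite expr0 mul1r.
apply: (le_trans (hM _)); rewrite exprS -mulrA.
apply: (le_trans (y := Num.max M 0 * hnorm ip (iter n A x))).
  by apply: ler_wpM2r; [exact: hnorm_ge0|rewrite le_max lexx].
by apply: ler_wpM2l => //; rewrite le_max lexx orbT.
Qed.

Lemma delta_part (A : V -> V) (S : R -> V -> V) (K Tp e : R) (N : nat) f g :
  is_exp_semigroup ip A S -> 0 <= K ->
  (forall n x, hnorm ip (iter n A x) <= K ^+ n * hnorm ip x) ->
  0 < e ->
  (forall n, (n < N)%N -> ip f (iter n A g) = 0) ->
  (forall a b, (N <= a)%N -> \sum_(a <= k < b) (Tp * K) ^+ k / (k`!)%:R < e) ->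
  forall t, 0 <= t <= Tp -> cmod (ip f (S t g)) <= hnorm ip f * e * (hnorm ip g + 1).
Proof.
move=> hS K0 hK e0 horth htail t /andP[t0 tT].
have [N' HN'] := hS t g e e0.
have hm := HN' (maxn N N') (leq_maxr N N'); rewrite /= in hm.
set P := \sum_(n < maxn N N') _ in hm.
have E : ip f (S t g) = ip f P - ip f (P - S t g) by rewrite ipBr opprB addrC subrK.
rewrite E; apply: le_trans; first exact: cmodD.
rewrite cmodN.
have B1 : cmod (ip f (P - S t g)) <= hnorm ip f * e.
  apply: le_trans; first exact: CS.
  by apply: ler_wpM2l; [exact: hnorm_ge0 | exact: ltW].
have B2 : cmod (ip f P) <= hnorm ip f * hnorm ip g * e.
  rewrite /P ip_sumr; apply: le_trans; first exact: cmod_sum.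
  have -> : \sum_(i < maxn N N') cmod (ip f ((t ^+ i / (i`!)%:R)%:C *: iter i A g)) =
    \sum_(0 <= i < maxn N N') cmod (ip f ((t ^+ i / (i`!)%:R)%:C *: iter i A g)).
    by rewrite big_mkord.
  rewrite (@big_cat_nat _ _ _ N 0 (maxn N N')) ?leq_maxl //=.
  rewrite big_nat_cond big1 ?add0r; last first.
    by move=> n /andP[/andP[_ nN] _]; rewrite ipZr horth // mulr0 cmod0.
  apply: (le_trans (y := hnorm ip f * hnorm ip g * \sum_(N <= k < maxn N N') ((Tp*K)^+k / (k`!)%:R))).
    rewrite mulr_sumr; apply: ler_sum_nat => k _; rewrite ipZr cmodM cmodJ cmod_real.
    have f0 := hnorm_ge0 f; have g0 := hnorm_ge0 g.
    have h1 : cmod (ip f (iter k A g)) <= hnorm ip f * (K ^+ k * hnorm ip g).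
      exact: le_trans (CS _ _) (ler_wpM2l f0 (hK k g)).
    have h2 : `|t ^+ k / (k`!)%:R| <= Tp ^+ k / (k`!)%:R.
      rewrite ger0_norm ?divr_ge0 ?exprn_ge0 //.
      by apply: ler_wpM2r; [rewrite invr_ge0|apply: lerXn2r; rewrite // nnegrE (le_trans t0)].
    apply: le_trans (ler_pM _ _ h2 h1) _ => //; first exact: cmod_ge0.
    by rewrite exprMn le_eqVlt; apply/orP; left; apply/eqP; ring.
  apply: ler_wpM2l; first by rewrite mulr_ge0 ?hnorm_ge0.
  exact: ltW (htail N (maxn N N') (leqnn N)).
apply: le_trans (lerD B2 B1) _.
by rewrite le_eqVlt; apply/orP; left; apply/eqP; ring.
Qed.
End IP.

Lemma final_ineq (R : realType) (c r n M Gm f2 d : R) : 0 < c -> 0 < r -> 0 <= n -> 1 <= M ->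
  0 <= Gm -> 0 < f2 ->
  let eps1 := c * r / (3 * (n + 1) * (M ^+ 2 * (Gm + 1))) in
  d ^+ 2 <= c * r * eps1 / (3 * (n + 1)) ->
  c * f2 <= n * (f2 * (d ^+ 2 / eps1 + M ^+ 2 * Gm * eps1) / r) -> False.
Proof.
intros c0 r0 n0 M1 Gm0 f0 eps1 hd hc.
have M0 : 0 < M ^+ 2 by rewrite exprn_gt0 // (lt_le_trans ltr01 M1).
have n1 : 0 < n + 1 by lra.
have G1 : 0 < Gm + 1 by lra.
have e0 : 0 < eps1.
  rewrite /eps1 divr_gt0 //; first exact: mulr_gt0.
  by rewrite !mulr_gt0 //; lra.
have X1 : d ^+ 2 / eps1 <= c * r / (3 * (n + 1)).
  rewrite ler_pdivrMr // (le_trans hd) // le_eqVlt; apply/orP; left; apply/eqP.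
  field; lra.
have X2 : M ^+ 2 * Gm * eps1 <= c * r / (3 * (n + 1)).
  rewrite /eps1.
  have -> : M ^+ 2 * Gm * (c * r / (3 * (n + 1) * (M ^+ 2 * (Gm + 1)))) =
     (c * r / (3 * (n + 1))) * (Gm / (Gm + 1)).
    field; do ?split; lra.
  rewrite ger_pMr; last by rewrite divr_gt0 // ?mulr_gt0 //; lra.
  by rewrite ler_pdivrMr // mul1r; lra.
have Y : d ^+ 2 / eps1 + M ^+ 2 * Gm * eps1 <= 2 * (c * r / (3 * (n + 1))) by lra.
have Z : n * (f2 * (d ^+ 2 / eps1 + M ^+ 2 * Gm * eps1) / r) <=
         n * (f2 * (2 * (c * r / (3 * (n + 1)))) / r).
  apply: ler_wpM2l => //; apply: ler_wpM2r; first by rewrite invr_ge0 ltW.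
  by apply: ler_wpM2l => //; rewrite ltW.
have W : n * (f2 * (2 * (c * r / (3 * (n + 1)))) / r) = c * f2 * (2 * n / (3 * (n + 1))).
  field; lra.
have Q : 2 * n / (3 * (n + 1)) < 1 by rewrite ltr_pdivrMr ?mul1r; lra.
have := le_trans hc Z; rewrite W => h.
have cf : 0 < c * f2 by rewrite mulr_gt0.
set P := c * f2 in cf h; set q := 2 * n / (3 * (n + 1)) in Q h.
nra.
Qed.

Lemma sum_const_seq (R : numDomainType) (T : Type) (s : seq T) (a : R) :
  \sum_(x <- s) a = (size s)%:R * a.
Proof.
elim: s => [|x s IH]; first by rewrite big_nil mul0r.
by rewrite big_cons IH /= -add1n natrD mulrDl mul1r.
Qed.

From mathcomp Require Import finmap.
Import Order.TTheory GRing.Theory Num.Theory.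
Local Open Scope ring_scope.
Local Open Scope classical_set_scope.

Arguments iter_bound {R V ip}.
Arguments delta_part {R V ip}.
Arguments exists_orth {R V ip}.
Arguments CS {R V ip}.
Arguments hnorm_ge0 {R V ip}.
Arguments hnorm_eq0 {R V ip}.
Arguments cmod_ge0 {R}.
Arguments int_exp {R}.
Arguments exp_tail {R}.

Theorem mainTheorem6 (R : realType) (V : lmodType R[i]) (ip : V -> V -> R[i])
  (A : V -> V) (S : R -> V -> V) (G : set V) :
  is_inf_dim_sep_Hilbert ip ->
  bounded_operator ip A ->
  is_exp_semigroup ip A S ->
  exp_stable ip S ->
  countable G ->
  semi_continuous_frame ip S G `[0%R, +oo[ ->
  infinite_set G.
Proof.
move=> [hip _ _ hinf] hA hS [M [om [M1 [om0 hstab]]]] _ [c [Cc [c0 [Cc0 hfr]]]].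
move=> finG.
pose L := fset_set G.
have hL : forall g, g \in L -> G g.
  by move=> g; rewrite in_fset_set // => /set_mem.
pose n : R := (size L)%:R.
pose Gm := \sum_(h <- L) hnorm ip h ^+ 2.
pose Gm1 := \sum_(h <- L) hnorm ip h.
have [K [K0 hK]] := iter_bound A hA.
pose r := - om.
have r0 : 0 < r by rewrite oppr_gt0.
pose eps1 := c * r / (3 * (n + 1) * (M ^+ 2 * (Gm + 1))).
have n0 : 0 <= n by rewrite ler0n.
have Gm0 : 0 <= Gm by rewrite sumr_ge0 // => h _; rewrite exprn_ge0 // hnorm_ge0.
have Gm10 : 0 <= Gm1 by rewrite sumr_ge0 // => h _; rewrite hnorm_ge0.
have hGm : forall g, g \in L -> hnorm ip g ^+ 2 <= Gm.
  move=> g gL; rewrite /Gm (big_rem g gL) /= lerDl.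
  by rewrite sumr_ge0 // => h _; rewrite exprn_ge0 // hnorm_ge0.
have hGm1 : forall g, g \in L -> hnorm ip g <= Gm1.
  move=> g gL; rewrite /Gm1 (big_rem g gL) /= lerDl.
  by rewrite sumr_ge0 // => h _; rewrite hnorm_ge0.
have M0 : 0 < M ^+ 2 by rewrite exprn_gt0 // (lt_le_trans ltr01 M1).
have e10 : 0 < eps1.
  rewrite /eps1 divr_gt0 //; first exact: mulr_gt0.
  by rewrite !mulr_gt0 //; lra.
pose T := ln eps1 / om.
have eT : expR (om * T) = eps1.
  by rewrite /T (mulrC om) divfK ?lt_eqF // lnK // posrE.
pose d0 := c * r * eps1 / (3 * (n + 1)).
have d00 : 0 < d0.
  apply: divr_gt0; first by apply: mulr_gt0 => //; exact: mulr_gt0.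
  by rewrite mulr_gt0 //; lra.
pose dl := Num.min 1 d0.
have dl0 : 0 < dl by rewrite lt_min ltr01 d00.
have dl1 : dl <= 1 by rewrite ge_min lexx.
have dld0 : dl <= d0 by rewrite ge_min lexx orbT.
have hd : dl ^+ 2 <= d0 by rewrite expr2; nra.
pose Tp := Num.max T 0.
have Tp0 : 0 <= Tp by rewrite le_max lexx orbT.
have TTp : T <= Tp by rewrite le_max lexx.
pose e := dl / (Gm1 + 1).
have e0 : 0 < e by rewrite divr_gt0 //; lra.
have [N hN] := exp_tail (Tp * K) e e0.
pose ws := [seq iter k A g | g <- (L : seq V), k <- iota 0 N].
have [f [fn0 hf]] := exists_orth hip ws hinf.
have horth : forall g, g \in L -> forall k, (k < N)%N -> ip f (iter k A g) = 0.
  move=> g gL k kN; apply: hf.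
  by apply: (allpairs_f (fun g k => iter k A g)) => //; rewrite mem_iota.
have f0 : 0 < hnorm ip f.
  rewrite lt_def hnorm_ge0 andbT; apply/eqP => /(hnorm_eq0 hip) h.
  by move/eqP: fn0.
pose B := hnorm ip f ^+ 2 * (dl ^+ 2 / eps1 + M ^+ 2 * Gm * eps1).
have hpt : forall g, g \in L -> forall t, 0 <= t ->
    cmod (ip f (S t g)) ^+ 2 <= B * expR (- r * t).
  move=> g gL t t0.
  have -> : - r * t = om * t by rewrite /r opprK.
  have fn := hnorm_ge0 f; have gn := hnorm_ge0 g.
  have hg := hGm g gL; have hg1 := hGm1 g gL.
  have xn := cmod_ge0 (ip f (S t g)).
  have E0 := expR_gt0 (om * t).
  set x := cmod _ in xn *; set F := hnorm ip f in fn f0 *; set E := expR _ in E0 *.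
  have P0 : 0 <= M ^+ 2 * Gm * eps1.
    by apply: mulr_ge0; [apply: mulr_ge0 =>//; exact: ltW|exact: ltW].
  have [tT|Tt] := leP t T.
  - have hx : x <= F * dl.
      apply: le_trans (delta_part hip A S K Tp e N f g hS K0 hK e0 (horth g gL) hN t _) _.
        by rewrite t0 (le_trans tT TTp).
      rewrite -mulrA ler_wpM2l // /e -mulrA ger_pMr // mulrC ler_pdivrMr ?mul1r; lra.
    have hE : eps1 <= E by rewrite -eT /E ler_expR ler_wnM2l // ltW.
    have hq : dl ^+ 2 / eps1 * eps1 = dl ^+ 2 by rewrite divfK ?gt_eqF.
    set q := dl ^+ 2 / eps1 in hq *.
    have q0 : 0 <= q by rewrite divr_ge0 ?exprn_ge0 ?ltW.
    set P := M ^+ 2 * Gm * eps1 in P0 *.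
    apply: (le_trans (y := F ^+ 2 * dl ^+ 2)).
      by rewrite -exprMn ler_sqr // nnegrE mulr_ge0 // ltW.
    rewrite /B -mulrA ler_pM2l ?exprn_gt0 //.
    rewrite -/q -/P -{1}hq.
    apply: (le_trans (y := q * E)); first by rewrite ler_wpM2l.
    by rewrite mulrDl lerDl mulr_ge0 // ltW.
  - have hx : x <= F * (M * E * hnorm ip g).
      apply: le_trans; first exact: (CS hip).
      by rewrite ler_wpM2l // hstab.
    have hE : E <= eps1 by rewrite -eT /E ler_expR ler_wnM2l // ltW.
    set G2 := hnorm ip g in gn hg hg1 hx *.
    have Y0 : 0 <= F * (M * E * G2).
      have ME : 0 <= M * E by apply: mulr_ge0; lra.
      have gn2 : 0 <= G2 by rewrite /G2 hnorm_ge0.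
      first [ (apply: mulr_ge0; [exact: fn | apply: mulr_ge0; [exact: ME| exact: gn2]]) | idtac "V1FAIL"; (rewrite mulr_ge0 // mulr_ge0 //) | idtac "V2FAIL"; nra ].
    apply: (le_trans (y := (F * (M * E * G2)) ^+ 2)).
      by rewrite ler_sqr ?nnegrE.
    rewrite (_ : (F * (M * E * G2)) ^+ 2 = F ^+ 2 * (M ^+ 2 * (G2 ^+ 2 * E)) * E); last by ring.
    rewrite /B ler_pM2r // ler_pM2l ?exprn_gt0 //.
    apply: (le_trans (y := M ^+ 2 * Gm * eps1)); last first.
      rewrite lerDr; apply: divr_ge0; [apply: exprn_ge0; exact: ltW | exact: ltW].
    rewrite -mulrA ler_pM2l //.
    by apply: ler_pM => //; [exact: sqr_ge0 | exact: ltW].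
have B0 : 0 <= B.
  apply: mulr_ge0; first exact: sqr_ge0.
  apply: addr_ge0; first by apply: divr_ge0; [exact: sqr_ge0 | exact: ltW].
  by apply: mulr_ge0; [apply: mulr_ge0 =>//; exact: ltW|exact: ltW].
have hint : forall g, g \in L ->
    (\int[lebesgue_measure]_(t in `[0%R, +oo[) ((cmod (ip f (S t g)) ^+ 2)%:E)
      <= (B / r)%:E)%E.
  move=> g gL; rewrite -(int_exp r B r0 B0).
  apply: le_integral_nn => t Dt; first by rewrite lee_fin sqr_ge0.
  rewrite lee_fin; apply: hpt => //.
  by move: Dt; rewrite /= in_itv /= andbT.
have [hlow _] := hfr f.
rewrite esum_fset // in hlow; last first.
  by move=> g _; apply: integral_ge0 => t _; rewrite lee_fin sqr_ge0.
rewrite fsbig_finite // -/L in hlow.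
have hs : (\sum_(g <- L) (\int[lebesgue_measure]_(t in `[0%R, +oo[)
      ((cmod (ip f (S t g)) ^+ 2)%:E)) <= \sum_(g <- L) (B / r)%:E)%E.
  rewrite big_seq [X in (_ <= X)%E]big_seq; apply: lee_sum => g gL; exact: hint.
rewrite sumEFin sum_const_seq in hs.
have := le_trans hlow hs; rewrite lee_fin => hc.
exact: (@final_ineq R c r n M Gm (hnorm ip f ^+ 2) dl c0 r0 n0 M1 Gm0 (exprn_gt0 2 f0) hd hc).
Qed.
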